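(* Let $(D,\tau,d,\Delta)$ be a TMO instance and let $k\in\{1,\dots,d\}$. Let $D'_k$ be the graph obtained by identifying the sink of the gadget $G_k$ with the source $s$ of $D$ (so $D'_k$ has source $s'$ and sink $t$, and travel times $\tau$ on $D$ and as specified on $G_k$). Then every convoy routing for $(D,\tau,d,\Delta)$ using exactly $k$ paths can be transformed into $k$ pairwise arc-disjoint $s'$-$t$-paths in $D'_k$ whose maximum length equals the makespan of the convoy routing, and conversely every collection of $k$ pairwise arc-disjoint $s'$-$t$-paths in $D'_k$ can be transformed into a convoy routing for $(D,\tau,d,\Delta)$ using $k$ paths whose makespan equals the maximum length of the paths. In particular, the minimum makespan over convoy routings with exactly $k$ paths equals the optimum of \textsc{Min-Max Disjoint Paths} on $D'_k$ with $k$ paths.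
   Context: TMO instance $(D,\tau,d,\Delta)$: directed graph $D=(V,A)$ with source $s$, sink $t$, travel times $\tau:A\to\mathbb{Z}_{\ge0}$, $d\in\mathbb{Z}_{\ge1}$ trains and headway $\Delta\in\mathbb{Z}_{\ge1}$. A convoy routing $(\boldsymbol{P},\boldsymbol{\sigma})$ consists of $k\le d$ pairwise arc-disjoint $s$-$t$-paths $P_1,\dots,P_k$ in $D$ and $\boldsymbol{\sigma}\in\mathbb{Z}_{\ge1}^k$ with $\sum_i\sigma_i=d$; its makespan is $\max_{i\in[k]}\{\tau(P_i)+(\sigma_i-1)\Delta\}$, where $\tau(P)=\sum_{a\in P}\tau_a$. The gadget $G_k$ is a bundle graph from $s'$ to its sink: a sequence of $d-k$ consecutive bundles (vertices $u_0=s',u_1,\dots,u_{d-k}$), where the $j$-th bundle consists of $k$ parallel arcs from $u_{j-1}$ to $u_j$, exactly one with travel time $\Delta$ and $k-1$ with travel time $0$; if $d=k$ the gadget is the single vertex $s'=s$. \textsc{Min-Max Disjoint Paths}: find $k$ pairwise arc-disjoint source-sink paths minimizing the maximum path length. *)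

(* Defs.v *)
From mathcomp Require Import all_boot.
Set Implicit Arguments. Unset Strict Implicit. Unset Printing Implicit Defensive.

Section Graphs.
Variables (V A : finType) (tail head : A -> V).

Fixpoint walk (x y : V) (p : seq A) : bool :=
  match p with
  | [::] => x == y
  | a :: p' => (tail a == x) && walk (head a) y p'
  end.

Definition is_path (x y : V) (p : seq A) : bool :=
  walk x y p && uniq (x :: map head p).

Definition ptime (tau : A -> nat) (p : seq A) : nat := \sum_(a <- p) tau a.

Definition disjoint_paths (k : nat) (x y : V) (P : 'I_k -> seq A) : Prop :=
  (forall i, is_path x y (P i)) /\
  (forall i j, i != j -> forall a, a \in P i -> a \notin P j).

Definition convoy_routing (s t : V) (d k : nat)
    (P : 'I_k -> seq A) (sigma : 'I_k -> nat) : Prop :=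
  disjoint_paths s t P /\ (forall i, 1 <= sigma i) /\ \sum_(i < k) sigma i = d.

Definition makespan (tau : A -> nat) (Delta k : nat)
    (P : 'I_k -> seq A) (sigma : 'I_k -> nat) : nat :=
  \max_(i < k) (ptime tau (P i) + (sigma i - 1) * Delta).

Definition maxlen (tau : A -> nat) (k : nat) (P : 'I_k -> seq A) : nat :=
  \max_(i < k) ptime tau (P i).

End Graphs.

(* The graph D'_k: the gadget G_k (with n = d - k bundles, internal vertices
   u_0 = s', ..., u_{n-1}; u_n is identified with s) glued in front of D.
   Gadget arc (j, i) goes from u_j to u_{j+1}; its travel time is Delta
   if i = 0 and 0 otherwise (exactly one Delta-arc per bundle). *)
Section Gadget.
Variables (V A : finType) (tail head : A -> V) (s : V) (tau : A -> nat)
          (d k Delta : nat).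

Definition gV := (V + 'I_(d - k))%type.
Definition gA := (A + ('I_(d - k) * 'I_k))%type.

Definition gvert (j : nat) : gV :=
  match (insub j : option 'I_(d - k)) with
  | Some o => inr o
  | None => inl s
  end.

Definition gsource : gV := gvert 0.

Definition gtail (e : gA) : gV :=
  match e with inl a => inl (tail a) | inr (j, _) => gvert j end.

Definition ghead (e : gA) : gV :=
  match e with inl a => inl (head a) | inr (j, _) => gvert j.+1 end.

Definition gtau (e : gA) : nat :=
  match e with inl a => tau a | inr (_, i) => if val i == 0 then Delta else 0 end.

End Gadget.

(* Main.v *)
Require Import Defs.
From mathcomp Require Import all_boot.
From mathcomp Require Import zify.
Set Implicit Arguments. Unset Strict Implicit. Unset Printing Implicit Defensive.

Definition getl (X Y : Type) (e : X + Y) : option X := if e is inl a then Some a else None.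
Definition getr (X Y : Type) (e : X + Y) : option Y := if e is inr a then Some a else None.

Lemma walk_cat (T E : finType) (tl hd : E -> T) x y p q :
  walk tl hd x y (p ++ q) =
  walk tl hd x (last x (map hd p)) p && walk tl hd (last x (map hd p)) y q.
Proof. elim: p x => [|a p IH] x /=; first by rewrite eqxx. by rewrite IH andbA. Qed.

Lemma mem_getl (X Y : eqType) (Q : seq (X + Y)) a : (a \in pmap (@getl X Y) Q) = (inl a \in Q).
Proof. by apply: can2_mem_pmap; [case=> //= ? ? [<-] | ]. Qed.
Lemma mem_getr (X Y : eqType) (Q : seq (X + Y)) a : (a \in pmap (@getr X Y) Q) = (inr a \in Q).
Proof. by apply: can2_mem_pmap; [case=> //= ? ? [<-] | ]. Qed.

Lemma sum_if_count (T : Type) (r : seq T) (p : pred T) D :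
  \sum_(x <- r) (if p x then D else 0) = count p r * D.
Proof. elim: r => [|x r IH]; first by rewrite big_nil. by rewrite big_cons IH /=; case: (p x). Qed.

Section G.
Variables (V A : finType) (tail head : A -> V) (s : V) (d k : nat).
Local Notation n := (d - k).
Local Notation gt := (@gtail V A tail s d k).
Local Notation gh := (@ghead V A head s d k).
Local Notation gv := (@gvert V s d k).

Lemma gvert_lt m (H : m < n) : gv m = inr (Ordinal H).
Proof. by rewrite /gvert insubT. Qed.
Lemma gvert_ge m : n <= m -> gv m = inl s.
Proof. by move=> H; rewrite /gvert insubF // ltnNge H. Qed.
Lemma gvert_inj m1 m2 : m1 <= n -> m2 <= n -> gv m1 = gv m2 -> m1 = m2.
Proof.
move=> h1 h2.
case: (ltnP m1 n) => l1; case: (ltnP m2 n) => l2.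
- by rewrite !gvert_lt => -[].
- by rewrite gvert_lt gvert_ge.
- by rewrite gvert_ge // gvert_lt.
- lia.
Qed.

Lemma walk_inl x y p : walk gt gh (inl x) (inl y) (map inl p) = walk tail head x y p.
Proof. by elim: p x => [|a p IH] x //=; rewrite IH. Qed.

Lemma walk_to_inl x y Q : walk gt gh (inl x) (inl y) Q ->
  exists2 p, Q = map inl p & walk tail head x y p.
Proof.
elim: Q x => [|e Q IH] x /=; first by exists [::].
case: e => [a|[j i]] /=.
- case/andP=> /eqP [<-] /IH [p -> Hp]; exists (a :: p) => //=. by rewrite eqxx.
- by rewrite gvert_lt.
Qed.

Lemma walk_gadget R m : map (fun x : 'I_n * 'I_k => val x.1) R = iota m (size R) ->
  walk gt gh (gv m) (gv (m + size R)) (map inr R).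
Proof.
elim: R m => [|[j i] R IH] m /=; first by rewrite addn0.
case=> <- E; rewrite eqxx /=; rewrite -addSnnS; exact: IH.
Qed.

Lemma heads_gadget R : map (fun x : 'I_n * 'I_k => val x.1) R = iota 0 n ->
  gv 0 :: map gh (map inr R) = map gv (iota 0 n.+1).
Proof.
move=> E.
have -> : map gh (map inr R) = map gv (map succn (map (fun x : 'I_n * 'I_k => val x.1) R)).
  by rewrite -!map_comp; apply: eq_map => -[].
rewrite E /=; congr (_ :: _); congr map.
by rewrite (iotaDl 1 0); apply: eq_map => i; rewrite add1n.
Qed.

Lemma uniq_gverts : uniq (map gv (iota 0 n.+1)).
Proof.
rewrite map_inj_in_uniq ?iota_uniq // => x y; rewrite !mem_iota !add0n !ltnS => /andP[_ hx] /andP[_ hy].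
exact: gvert_inj.
Qed.

Lemma walk_decomp t m Q : m <= n -> walk gt gh (gv m) (inl t) Q ->
  [/\ Q = map inr (pmap (@getr _ _) Q) ++ map inl (pmap (@getl _ _) Q),
      map (fun x : 'I_n * 'I_k => val x.1) (pmap (@getr _ _) Q) = iota m (n - m),
      walk gt gh (gv m) (inl s) (map inr (pmap (@getr _ _) Q))
    & walk tail head s t (pmap (@getl _ _) Q)].
Proof.
elim: Q m => [|e Q IH] m hm /=.
- case: (ltnP m n) => l; first by rewrite gvert_lt.
  have -> : m = n by lia.
  rewrite gvert_ge // => /eqP [->]; by rewrite subnn eqxx.
- case: e => [a|[j i]] /=.
  + case: (ltnP m n) => l; first by rewrite gvert_lt.
    have em : m = n by lia.
    rewrite em gvert_ge // => /andP[/eqP [ea] /walk_to_inl [p EQ Hp]].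
    subst Q; clear IH.
    have -> : pmap (@getr _ _) (map (@inl A ('I_n * 'I_k)) p) = [::] by elim: p {Hp}.
    have -> : pmap (@getl _ _) (map (@inl A ('I_n * 'I_k)) p) = p by elim: p {Hp} => //= ? ? ->.
    rewrite subnn /=. split => //; by rewrite ea eqxx.
  + move/andP=> [/eqP E W].
    have hj : j < n := ltn_ord j.
    have ejm : val j = m by apply: gvert_inj => //; exact: ltnW.
    have [E1 E2 E3 E4] := IH _ hj W.
    split => //=.
    * by rewrite {1}E1.
    * by rewrite E2 ejm -(subnSK (_ : m < n)) // -ejm.
    * by rewrite E eqxx.
Qed.

End G.
Section D2.
Variables (V A : finType) (tail head : A -> V) (s t : V) (tau : A -> nat) (d k Delta : nat).
Local Notation n := (d - k).
Local Notation gt := (@gtail V A tail s d k).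
Local Notation gh := (@ghead V A head s d k).
Local Notation gv := (@gvert V s d k).

Lemma dir2 (hk : 0 < k) (hkd : k <= d) (Q : 'I_k -> seq (gA A d k)) :
  disjoint_paths gt gh (gsource s d k) (inl t) Q ->
  exists (P : 'I_k -> seq A) (sigma : 'I_k -> nat),
    convoy_routing tail head s t d P sigma /\
    makespan tau Delta P sigma = maxlen (@gtau A tau d k Delta) Q.
Proof.
move=> [HP HD].
pose R i := pmap (@getr _ _) (Q i).
pose L i := pmap (@getl _ _) (Q i).
have dec i := walk_decomp (leq0n n) (andP (HP i)).1.
have E1 i : Q i = map inr (R i) ++ map inl (L i) by case: (dec i).
have E2 i : map (fun x : 'I_n * 'I_k => val x.1) (R i) = iota 0 n by case: (dec i); rewrite subn0.
have E4 i : walk tail head s t (L i) by case: (dec i).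
pose cnt i := count (fun x : 'I_n * 'I_k => val x.2 == 0) (R i).
exists L, (fun i => (cnt i).+1).
pose z : 'I_k := Ordinal hk.
have Ru i : uniq (R i) by apply: (@map_uniq _ _ (fun x : 'I_n * 'I_k => val x.1)); rewrite E2 iota_uniq.
have cntE i : cnt i = \sum_(j < n) ((j, z) \in R i).
  rewrite /cnt -sumn_count sumnE big_map big_uniq // big_mkcond /=.
  rewrite (eq_bigr (fun p : 'I_n * 'I_k => (fun j c => if (j, c) \in R i then nat_of_bool (val c == 0) else 0) p.1 p.2)); last by case.
  rewrite -(pair_bigA _ (fun j c => if (j, c) \in R i then nat_of_bool (val c == 0) else 0)) /=.
  apply: eq_bigr => j _; rewrite (bigD1 z) //= big1 ?addn0.
    by case: ((j, z) \in R i).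
  move=> c; rewrite -val_eqE /= => hc; by rewrite (negbTE hc); case: ifP.
have ex j : exists i, (j, z) \in R i.
  have hc i : exists c, (j, c) \in R i.
    have : val j \in map (fun x : 'I_n * 'I_k => val x.1) (R i) by rewrite E2 mem_iota /=.
    case/mapP=> -[j' c] hx /= ej; exists c; suff -> : j = j' by [].
    exact: val_inj.
  pose f i := odflt z [pick c | (j, c) \in R i].
  have fR i : (j, f i) \in R i.
    rewrite /f; case: pickP => //= H; have [c Hc] := hc i; by rewrite H in Hc.
  have finj : injective f.
    move=> i1 i2 e; apply/eqP; apply/negPn/negP => ne.
    have := HD _ _ ne (inr (j, f i1)); rewrite -!mem_getr -/(R i1) -/(R i2) fR e fR.
    by move=> /(_ isT).
  have := inj_card_onto finj (leqnn _) z; case/codomP=> i ei; exists i; rewrite ei; exact: fR.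
have one j : \sum_(i < k) ((j, z) \in R i) = 1.
  have [i0 h0] := ex j; rewrite (bigD1 i0) //= h0 big1 // => i ne.
  apply/eqP; rewrite eqb0; apply/negP => h; have := HD _ _ ne (inr (j, z)); rewrite -!mem_getr -/(R i) -/(R i0) h h0.
  by move=> /(_ isT).
split; [split; [split|split] |].
- move=> i; rewrite /is_path E4 /=.
  have U := andP (HP i); case: U => _; rewrite E1 map_cat -cat_cons heads_gadget // cat_uniq.
  case/and3P=> _ Hh U2.
  have EE : map gh (map inl (L i)) = map inl (map head (L i)) by rewrite -!map_comp.
  rewrite EE in Hh U2.
  have inlI : injective (@inl V (ordinal n)) by move=> x y [].
  rewrite (map_inj_uniq inlI) in U2.
  rewrite U2 andbT; apply/negP => hs.
  have Hs : inl s \in map gv (iota 0 n.+1).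
    rewrite -(@gvert_ge V s d k n (leqnn _)); apply: map_f; rewrite mem_iota; lia.
  move/hasPn: Hh => /(_ (inl s)); rewrite map_f // => /(_ isT); by rewrite Hs.
- move=> i j ne a; rewrite mem_getl => h; rewrite mem_getl; exact: HD ne _ h.
- by [].
- under eq_bigr do rewrite -add1n.
  rewrite big_split /= sum_nat_const card_ord muln1.
  under eq_bigr do rewrite cntE.
  rewrite exchange_big /=; under eq_bigr do rewrite one.
  rewrite sum_nat_const card_ord muln1; lia.
- rewrite /makespan /maxlen; apply: eq_bigr => i _.
  rewrite {1}E1 /ptime big_cat !big_map /=.
  rewrite (eq_bigr (fun x : 'I_n * 'I_k => if val x.2 == 0 then Delta else 0)); last by case.
  by rewrite sum_if_count subn1 /= addnC.
Qed.
End D2.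
Lemma walk_last (T E : finType) (tl hd : E -> T) x y p :
  walk tl hd x y p -> last x (map hd p) = y.
Proof. elim: p x => [|a p IH] x /=; [by move/eqP | by case/andP=> _ /IH]. Qed.

Section D1.
Variables (V A : finType) (tail head : A -> V) (s t : V) (tau : A -> nat) (d k Delta : nat).
Local Notation n := (d - k).
Local Notation gt := (@gtail V A tail s d k).
Local Notation gh := (@ghead V A head s d k).
Local Notation gv := (@gvert V s d k).

Lemma dir1 (hk : 0 < k) (P : 'I_k -> seq A) (sigma : 'I_k -> nat) :
  convoy_routing tail head s t d P sigma ->
  exists Q : 'I_k -> seq (gA A d k),
    disjoint_paths gt gh (gsource s d k) (inl t) Q /\
    maxlen (@gtau A tau d k Delta) Q = makespan tau Delta P sigma.
Proof.
move=> [[HP HD] [Hs1 Hsum]].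
pose z : 'I_k := Ordinal hk.
pose L := flatten [seq nseq (sigma i - 1) i | i <- enum 'I_k].
have sumE : \sum_(i < k) (sigma i - 1) = n.
  have : \sum_(i < k) ((sigma i - 1) + 1) = d.
    by rewrite -Hsum; apply: eq_bigr => i _; rewrite subnK.
  rewrite big_split /= sum_nat_const card_ord muln1; lia.
have sizeL : size L = n.
  rewrite size_flatten /shape -map_comp sumnE big_map big_enum /=.
  rewrite -sumE; apply: eq_bigr => i _; by rewrite size_nseq.
have countL i : count (pred1 i) L = sigma i - 1.
  rewrite count_flatten -map_comp sumnE big_map big_enum /=.
  rewrite (bigD1 i) //= count_nseq /= eqxx mul1n big1 ?addn0 // => j ne.
  by rewrite count_nseq /= (negbTE ne).
pose o (j : 'I_n) := nth z L (val j).
pose c (i : 'I_k) (j : 'I_n) : 'I_k := if i == o j then z else if i == z then o j else i.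
have cz i j : (c i j == z) = (i == o j).
  rewrite /c; case: (eqVneq i (o j)) => [e|ne]; first by rewrite ?eqxx.
  case: (eqVneq i z) => [e|nz]; last by rewrite (negbTE nz).
  by rewrite -e eq_sym (negbTE ne).
have cinj j i1 i2 : c i1 j = c i2 j -> i1 = i2.
  rewrite /c; do 4?(case: ifP => /eqP ?); move=> *; subst; congruence.
pose R i := [seq (j, c i j) | j <- enum 'I_n].
have E2 i : map (fun x : 'I_n * 'I_k => val x.1) (R i) = iota 0 n.
  by rewrite -map_comp /= val_enum_ord.
have sizeR i : size (R i) = n by rewrite size_map size_enum_ord.
have cntR i : count (fun x : 'I_n * 'I_k => val x.2 == 0) (R i) = sigma i - 1.
  rewrite count_map -countL.
  rewrite (eq_count (a2 := fun j => o j == i)); last first.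
    by move=> j /=; rewrite [o j == i]eq_sym -(cz i j).
  have -> : L = map o (enum 'I_n).
    transitivity (map (nth z L) (map val (enum 'I_n))); last by rewrite -map_comp.
    by rewrite val_enum_ord -sizeL; symmetry; exact: (mkseq_nth z L).
  by rewrite [RHS]count_map.
have inlI : injective (@inl V (ordinal n)) by move=> x y [].
exists (fun i => map inr (R i) ++ map inl (P i)).
split; [split|].
- move=> i; rewrite /is_path; have /andP[W U] := HP i; apply/andP; split.
  + have WG := walk_gadget tail head s (m := 0) (R := R i).
    rewrite sizeR in WG; have {}WG := WG (E2 i).
    rewrite walk_cat (walk_last WG) WG /= (gvert_ge s (leqnn n)) walk_inl //.
  + rewrite map_cat -cat_cons heads_gadget // cat_uniq uniq_gverts /=.
    have EE : map gh (map inl (P i)) = map inl (map head (P i)) by rewrite -!map_comp.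
    rewrite EE (map_inj_uniq inlI); move: U; rewrite /= => /andP[sP ->]; rewrite andbT.
    apply/hasPn => y /mapP [v hv ->]; change (inl v \notin map gv (iota 0 n.+1)); apply/negP => /mapP [m hm e].
    move: hm; rewrite mem_iota add0n ltnS => /andP[_ hm].
    case: (ltnP m n) => l; first by move: e; rewrite gvert_lt.
    have em : m = n by lia.
    move: e; rewrite em gvert_ge // => -[ev]; subst v; by rewrite hv in sP.
- move=> i1 i2 ne [x|y]; rewrite !mem_cat.
  + have F i : (inl x \in map inr (R i)) = false by apply/mapP => -[].
    have inlA : injective (@inl A ('I_n * 'I_k)) by move=> ? ? [].
    rewrite !F !(mem_map inlA) /=; exact: HD.
  + have inrI : injective (@inr A ('I_n * 'I_k)) by move=> ? ? [].
    have F i : (inr y \in map inl (P i)) = false by apply/mapP => -[].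
    rewrite !F !(mem_map inrI) !orbF => /mapP [j _ ->]; apply/negP => /mapP [j' _ [ej ecj]].
    subst j'; move/eqP: ne; apply; exact: cinj ecj.
- rewrite /makespan /maxlen; apply: eq_bigr => i _.
  rewrite /ptime big_cat (big_map inr) (big_map inl).
  rewrite (eq_bigr (fun x : 'I_n * 'I_k => if val x.2 == 0 then Delta else 0)); last by case.
  by rewrite sum_if_count cntR addnC.
Qed.
End D1.

Theorem mainTheorem7 (V A : finType) (tail head : A -> V) (s t : V)
    (tau : A -> nat) (d Delta k : nat) :
  1 <= d -> 1 <= Delta -> 1 <= k <= d ->
  (* convoy routings with k paths -> k disjoint s'-t paths in D'_k *)
  (forall (P : 'I_k -> seq A) (sigma : 'I_k -> nat),
     convoy_routing tail head s t d P sigma ->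
     exists Q : 'I_k -> seq (gA A d k),
       disjoint_paths (@gtail V A tail s d k) (@ghead V A head s d k)
         (@gsource V s d k) (inl t) Q /\
       maxlen (@gtau A tau d k Delta) Q = makespan tau Delta P sigma) /\
  (* k disjoint s'-t paths in D'_k -> convoy routing with k paths *)
  (forall Q : 'I_k -> seq (gA A d k),
     disjoint_paths (@gtail V A tail s d k) (@ghead V A head s d k)
       (@gsource V s d k) (inl t) Q ->
     exists (P : 'I_k -> seq A) (sigma : 'I_k -> nat),
       convoy_routing tail head s t d P sigma /\
       makespan tau Delta P sigma = maxlen (@gtau A tau d k Delta) Q).
Proof.
move=> _ _ /andP[hk hkd]; split.
- move=> P sigma H; exact: (dir1 tau Delta hk H).
- move=> Q H; exact: (dir2 tau Delta hk hkd H).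
Qed.
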